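(* Let $f:V\to W$ be a smooth map between finite-dimensional real inner product spaces with $|f|_{[r]}<\infty$, and let $P$ be a monopolar $k$-chain in $V$. Then $|f_*P|^{\natural_r}\le|f|_{[r]}\,|P|^{\natural_r}$.
   Context: For a simple $k$-vector $\alpha=w_1\wedge\dots\wedge w_k$, $M(\alpha)=\sqrt{\det\langle w_i,w_j\rangle}$. A monopolar $k$-chain in $V$ is a finite formal sum $\sum_i(p_i;\alpha_i)$, $p_i\in V$, $\alpha_i\in\Lambda_k(V)$, linear in the second slot at each point. $T_u(p;\alpha)=(p+u;\alpha)$, $\Delta_u=T_u-\mathrm{id}$, $\Delta^j_U=\Delta_{u_1}\circ\dots\circ\Delta_{u_j}$ for $U=(u_1,\dots,u_j)$, $\|\Delta^j_U(p;\alpha)\|_j=|u_1|\cdots|u_j|M(\alpha)$. A $k$-form is a linear functional $\omega$ on monopolar $k$-chains; $\|\omega\|_0=\sup\{|\omega(p;\alpha)|:\alpha$ simple, $M(\alpha)=1\}$, $\|\omega\|_j=\sup\{|\omega(\Delta^j_U(p;\alpha))|:\|\Delta^j_U(p;\alpha)\|_j=1\}$, $|\omega|^{\natural_r}=\max_{0\le j\le r}\|\omega\|_j$, $\mathcal B_k^r$ = forms with finite $|\omega|^{\natural_r}$. For a chain $P$, $|P|^{\natural_r}=\sup_{0\ne\omega\in\mathcal B_k^r}\omega(P)/|\omega|^{\natural_r}$. Pushforward: $f_*(x;v_1\wedge\dots\wedge v_k)=(f(x);Df_xv_1\wedge\dots\wedge Df_xv_k)$, extended linearly. $\|f\|_{[j]}=\sup|f_*\Delta^j_U(x;\alpha)|^{\natural_j}/\|\Delta^j_U(x;\alpha)\|_j$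 over $x$, nonzero $U$, nonzero simple $\alpha$; $|f|_{[r]}=\max\{\|f\|_{[0]},\dots,\|f\|_{[r]}\}$. *)

(* Defs.v *)
From HB Require Import structures.
From mathcomp Require Import all_boot all_order all_algebra.
From mathcomp Require Import all_classical all_reals all_analysis.
Set Implicit Arguments. Unset Strict Implicit. Unset Printing Implicit Defensive.
Import Order.TTheory GRing.Theory Num.Theory.
Import numFieldNormedType.Exports.
Local Open Scope classical_set_scope.
Local Open Scope ring_scope.

Section Chains.
Variable R : realType.

(* The finite-dimensional real inner product space V is modelled by 'rV[R]_n
   with the standard (Euclidean) inner product. *)
Definition dotv (n : nat) (u v : 'rV[R]_n) : R := (u *m v^T) 0 0.
Definition enorm (n : nat) (u : 'rV[R]_n) : R := Num.sqrt (dotv u u).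

(* A simple k-vector w_1 /\ ... /\ w_k is represented by the family w. *)
Definition gram (n k : nat) (w : 'I_k -> 'rV[R]_n) : 'M[R]_k :=
  \matrix_(i, j) dotv (w i) (w j).
Definition mass (n k : nat) (w : 'I_k -> 'rV[R]_n) : R :=
  Num.sqrt (\det (gram w)).

(* A monopolar k-chain: finite formal sum  sum_i c_i (p_i ; w_i1 /\ ... /\ w_ik). *)
Definition chain (n k : nat) := seq (R * 'rV[R]_n * ('I_k -> 'rV[R]_n)).

(* A k-form: linear functional on monopolar k-chains, i.e. at each point a
   linear functional on Lambda_k(V), i.e. an alternating k-linear map. *)
Definition form (n k : nat) := 'rV[R]_n -> ('I_k -> 'rV[R]_n) -> R.

Definition upd (n k : nat) (w : 'I_k -> 'rV[R]_n) (i : 'I_k) (x : 'rV[R]_n) :=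
  fun j => if j == i then x else w j.

Definition is_kform (n k : nat) (om : form n k) : Prop :=
  forall p : 'rV[R]_n,
    (forall (w : 'I_k -> 'rV[R]_n) (i : 'I_k) (a : R) (u v : 'rV[R]_n),
        om p (upd w i (a *: u + v)) = a * om p (upd w i u) + om p (upd w i v))
    /\ (forall (w : 'I_k -> 'rV[R]_n) (i j : 'I_k), i != j -> w i = w j -> om p w = 0).

Definition evalf (n k : nat) (om : form n k) (P : chain n k) : R :=
  \sum_(t <- P) t.1.1 * om t.1.2 t.2.

Definition diffchain (n k j : nat) (p : 'rV[R]_n) (U : 'I_j -> 'rV[R]_n)
    (w : 'I_k -> 'rV[R]_n) : chain n k :=
  [seq ((-1) ^+ (j - #|A|), p + \sum_(i in A) U i, w) | A : {set 'I_j}].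

(* || Delta^j_U (p; alpha) ||_j = |u_1| ... |u_j| M(alpha) *)
Definition dnorm (n k j : nat) (U : 'I_j -> 'rV[R]_n) (w : 'I_k -> 'rV[R]_n) : R :=
  (\prod_(i < j) enorm (U i)) * mass w.

Local Open Scope ereal_scope.

(* ||omega||_j (for j = 0 this is literally ||omega||_0, as Delta^0 = id and
   the empty product is 1).  Sups of nonnegative quantities; sup of the empty
   set is taken to be 0. *)
Definition formnorm_j (n k : nat) (om : form n k) (j : nat) : \bar R :=
  ereal_sup (0 |` [set x | exists (p : 'rV[R]_n) (U : 'I_j -> 'rV[R]_n)
                             (w : 'I_k -> 'rV[R]_n),
      dnorm U w = 1%R /\ x = (`| evalf om (diffchain p U w) |)%:E]).

Definition formnorm (n k r : nat) (om : form n k) : \bar R :=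
  \big[Order.max/0]_(j < r.+1) formnorm_j om j.

Definition chainnorm (n k r : nat) (P : chain n k) : \bar R :=
  ereal_sup (0 |` [set x | exists om : form n k,
      [/\ is_kform om,
          (exists p w, om p w <> 0%R),
          formnorm r om < +oo &
          x = (evalf om P / fine (formnorm r om))%:E]]).

Definition push (n m k : nat) (f : 'rV[R]_n -> 'rV[R]_m) (P : chain n k) : chain m k :=
  map (fun t : R * 'rV[R]_n * ('I_k -> 'rV[R]_n) =>
         let: (c, p, w) := t in (c, f p, fun i : 'I_k => 'd f p (w i))) P.

Definition mapnorm_j (n m k : nat) (f : 'rV[R]_n -> 'rV[R]_m) (j : nat) : \bar R :=
  ereal_sup (0 |` [set x | exists (p : 'rV[R]_n) (U : 'I_j -> 'rV[R]_n)
                             (w : 'I_k -> 'rV[R]_n),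
      [/\ (forall i, U i != 0%R), mass w != 0%R &
          x = chainnorm j (push f (diffchain p U w)) * ((dnorm U w)^-1)%:E]]).

Definition mapnorm (n m k r : nat) (f : 'rV[R]_n -> 'rV[R]_m) : \bar R :=
  \big[Order.max/0]_(j < r.+1) mapnorm_j k f j.

Local Close Scope ereal_scope.

Fixpoint diffk (n m : nat) (d : nat) (f : 'rV[R]_n -> 'rV[R]_m) : Prop :=
  match d with
  | 0 => True
  | d'.+1 => (forall x, differentiable f x) /\
             (forall v : 'rV[R]_n, diffk d' (fun x => 'd f x v))
  end.
Definition smooth (n m : nat) (f : 'rV[R]_n -> 'rV[R]_m) : Prop :=
  forall d, diffk d f.

End Chains.

(* Main.v *)
Set Warnings "-all".
Require Import Defs.
From HB Require Import structures.
From mathcomp Require Import all_boot all_order all_algebra.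
From mathcomp Require Import all_classical all_reals all_analysis.
Import Order.TTheory GRing.Theory Num.Theory.
Import numFieldNormedType.Exports.
Set Implicit Arguments. Unset Strict Implicit.
Local Open Scope ring_scope.

Lemma sq_mx_eq0 {R : realType} {n} (a : 'rV[R]_n) : (a *m a^T) 0 0 = 0 -> a = 0.
Proof.
rewrite mxE => H; apply/rowP => j; rewrite mxE.
have H0 : forall l, predT l -> 0 <= a 0 l * a^T l 0.
  by move=> l _; rewrite mxE -expr2 sqr_ge0.
have := @psumr_eq0P _ _ predT (fun l => a 0 l * a^T l 0) H0 H j isT.
by rewrite mxE => /eqP; rewrite mulf_eq0 orbb => /eqP.
Qed.

Lemma sq_mx_ge0 (R : realType) n (a : 'rV[R]_n) : 0 <= (a *m a^T) 0 0.
Proof. by rewrite mxE; apply: sumr_ge0 => l _; rewrite mxE -expr2 sqr_ge0. Qed.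

Lemma gram_psd (R : realType) n k (W : 'M[R]_(k,n)) : 0 <= \det (W *m W^T).
Proof.
elim: k W => [|k IH] W; first by rewrite det_mx00.
pose W' : 'M[R]_(1 + k, n) := W.
pose a := usubmx W'; pose B := dsubmx W'.
pose s := (a *m a^T) 0 0.
pose c := B *m a^T.
pose X := B - (s^-1 *: c) *m a.
pose E : 'M[R]_(1 + k) := block_mx 1%:M 0 (- (s^-1 *: c)) 1%:M.
have hc : X *m a^T = 0.
  rewrite /X mulmxBl -mulmxA [a *m a^T]mx11_scalar -/s -scalemxAl mul_mx_scalar.
  rewrite scalerA.
  have [s0|s0] := eqVneq s 0.
    by rewrite /c (@sq_mx_eq0 _ _ a s0) trmx0 mulmx0 scaler0 subr0.
  by rewrite mulVf // scale1r subrr.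
have hE : \det E = 1 by rewrite det_lblock !det1 mulr1.
have hEW : E *m W' = col_mx a X.
  have -> : E *m W' = E *m col_mx a B by rewrite vsubmxK.
  rewrite mul_block_col !mul1mx mul0mx addr0 addrC.
  by rewrite mulNmx.
have : \det (W *m W^T) = \det ((E *m W') *m (E *m W')^T).
  by rewrite trmx_mul !mulmxA -[E *m W' *m W'^T]mulmxA !det_mulmx det_tr hE !mul1r mulr1.
move=> ->; rewrite hEW tr_col_mx mul_col_row hc.
have -> : a *m X^T = 0 by rewrite -(trmxK a) -trmx_mul hc trmx0.
rewrite det_ublock [a *m a^T]mx11_scalar det_scalar1.
by apply: mulr_ge0; [apply: sq_mx_ge0 | apply: IH].
Qed.

Definition matv (R : realType) n k (v : 'I_k -> 'rV[R]_n) : 'M[R]_(k,n) :=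
  \matrix_(i, j) v i 0 j.

Lemma gramE (R : realType) n k (v : 'I_k -> 'rV[R]_n) :
  gram v = matv v *m (matv v)^T.
Proof.
apply/matrixP => i j; rewrite !mxE /dotv mxE.
by apply: eq_bigr => l _; rewrite !mxE.
Qed.

Lemma upd_id (R : realType) n k (w : 'I_k -> 'rV[R]_n) i : upd w i (w i) = w.
Proof. by apply: funext => j; rewrite /upd; case: eqP => // ->. Qed.

Section KF.
Lemma kf_zero (R : realType) n k (om : Defs.form R n k) p w i :
  is_kform om -> om p (upd w i 0) = 0.
Proof.
move=> /(_ p) [L _]; have := L w i 1 0 0.
rewrite scale1r addr0 mul1r => H.
by have := congr1 (fun z => z - om p (upd w i 0)) H; rewrite addrK subrr.
Qed.

Lemma kf_scale (R : realType) n k (om : Defs.form R n k) p w i a u :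
  is_kform om -> om p (upd w i (a *: u)) = a * om p (upd w i u).
Proof.
move=> H; have [L _] := H p; have := L w i a u 0.
by rewrite addr0 kf_zero // addr0.
Qed.

Lemma kf_add (R : realType) n k (om : Defs.form R n k) p w i u v :
  is_kform om -> om p (upd w i (u + v)) = om p (upd w i u) + om p (upd w i v).
Proof.
move=> H; have [L _] := H p; have := L w i 1 u v.
by rewrite scale1r mul1r.
Qed.

Lemma kf_sum (R : realType) n k (om : Defs.form R n k) p w i (I : Type)
  (s : seq I) (F : I -> 'rV[R]_n) :
  is_kform om -> om p (upd w i (\sum_(l <- s) F l)) = \sum_(l <- s) om p (upd w i (F l)).
Proof.
move=> H; elim: s => [|x s IH]; first by rewrite !big_nil kf_zero.
by rewrite !big_cons kf_add // IH.
Qed.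

Lemma kf_dep (R : realType) n k (om : Defs.form R n k) p (v : 'I_k -> 'rV[R]_n)
  (x : 'rV[R]_k) :
  is_kform om -> x != 0 -> \sum_i x 0 i *: v i = 0 -> om p v = 0.
Proof.
move=> H xn0 hs.
have [i0 hi0] : exists i0, x 0 i0 != 0.
  apply/existsP; apply: contraNT xn0; rewrite negb_exists => /forallP h.
  by apply/eqP/rowP => j; rewrite mxE; apply/eqP; have := h j; rewrite negbK.
have := kf_zero p v i0 H; rewrite -hs kf_sum // (bigD1 i0) //= kf_scale // upd_id.
rewrite big1 ?addr0; last first.
  move=> j hj; rewrite kf_scale //; have [_ A] := H p.
  rewrite (A _ i0 j) ?mulr0 //; first by rewrite eq_sym.
  by rewrite /upd eqxx (negbTE hj).
by move/eqP; rewrite mulf_eq0 (negbTE hi0) => /eqP.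
Qed.

Lemma row_matv (R : realType) n k (v : 'I_k -> 'rV[R]_n) i : row i (matv v) = v i.
Proof. by apply/rowP => j; rewrite !mxE. Qed.

Lemma kf_detpos (R : realType) n k (om : Defs.form R n k) p (v : 'I_k -> 'rV[R]_n) :
  is_kform om -> om p v != 0 -> 0 < \det (gram v).
Proof.
move=> H hv; rewrite lt_def gramE gram_psd andbT.
apply/negP => /det0P [x xn0 hx].
pose y := x *m matv v.
have y0 : y = 0.
  apply: sq_mx_eq0; rewrite /y trmx_mul mulmxA -(mulmxA x) hx mul0mx.
  by rewrite mxE.
move: hv; rewrite (kf_dep p H xn0) ?eqxx //.
rewrite -[RHS]y0 /y mulmx_sum_row; apply: eq_bigr => i _.
by rewrite row_matv.
Qed.

Lemma kf_mass1 (R : realType) n k (om : Defs.form R n k) p (v : 'I_k -> 'rV[R]_n) :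
  is_kform om -> om p v != 0 -> exists w, mass w = 1 /\ om p w != 0.
Proof.
case: k om v => [|k] om v H hv.
  by exists v; split => //; rewrite /mass det_mx00 sqrtr1.
have dpos := kf_detpos H hv.
pose d := \det (gram v).
pose c := (Num.sqrt d)^-1.
have sq0 : 0 < Num.sqrt d by rewrite sqrtr_gt0.
have c0 : c != 0 by rewrite invr_eq0 gt_eqF.
pose w := upd v ord0 (c *: v ord0).
exists w; split; last first.
  by rewrite /w kf_scale // upd_id mulf_neq0.
pose D := diag_mx (\row_(i < k.+1) (if i == ord0 then c else 1)).
have hw : matv w = D *m matv v.
  apply/matrixP => i j; rewrite mul_diag_mx !mxE /w /upd.
  by case: eqP => [->|_]; rewrite ?mxE ?mul1r.
rewrite /mass gramE hw trmx_mul mulmxA -(mulmxA D) -gramE !det_mulmx det_tr.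
have hD : \det D = c.
  rewrite det_diag big_ord_recl mxE eqxx big1 ?mulr1 // => i _.
  by rewrite mxE.
rewrite hD -/d mulrC mulrA -expr2 exprVn sqr_sqrtr ?ltW // mulVf ?gt_eqF //.
by rewrite sqrtr1.
Qed.
End KF.

Local Open Scope ereal_scope.

Lemma formnorm_j_ge0 (R : realType) n k (om : Defs.form R n k) j :
  0 <= formnorm_j om j.
Proof. by apply: ereal_sup_ubound; left. Qed.

Lemma formnorm_j_le (R : realType) n k (om : Defs.form R n k) j r :
  (j <= r)%N -> formnorm_j om j <= formnorm r om.
Proof.
move=> hj; rewrite /formnorm.
have hj' : (j < r.+1)%N by [].
exact: (le_bigmax 0 (fun i : 'I_r.+1 => formnorm_j om i) (Ordinal hj')).
Qed.

Lemma formnorm_ge0 (R : realType) n k (om : Defs.form R n k) r :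
  0 <= formnorm r om.
Proof. exact: le_trans (formnorm_j_ge0 om 0) (formnorm_j_le om (leq0n r)). Qed.

Lemma chainnorm_ge0 (R : realType) n k r (P : chain R n k) : 0 <= chainnorm r P.
Proof. by apply: ereal_sup_ubound; left. Qed.

Lemma mapnorm_j_ge0 (R : realType) n m k (f : 'rV[R]_n -> 'rV[R]_m) j :
  0 <= mapnorm_j k f j.
Proof. by apply: ereal_sup_ubound; left. Qed.

Lemma mapnorm_j_le (R : realType) n m k (f : 'rV[R]_n -> 'rV[R]_m) j r :
  (j <= r)%N -> mapnorm_j k f j <= mapnorm k r f.
Proof.
move=> hj; rewrite /mapnorm.
have hj' : (j < r.+1)%N by [].
exact: (le_bigmax 0 (fun i : 'I_r.+1 => mapnorm_j k f i) (Ordinal hj')).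
Qed.

Lemma evalf_diff0 (R : realType) n k (om : Defs.form R n k) p (U : 'I_0 -> 'rV[R]_n) w :
  evalf om (diffchain p U w) = om p w.
Proof.
rewrite /evalf /diffchain big_image /=.
rewrite (big_pred1 (finset.set0 : {set 'I_0})) /=; last first.
  move=> A; rewrite /= inE; apply/esym/eqP/setP => x; case: x => x hx.
  by [].
by rewrite cards0 expr0 big_set0 addr0 mul1r.
Qed.

Lemma dnorm0 (R : realType) n k (U : 'I_0 -> 'rV[R]_n) (w : 'I_k -> 'rV[R]_n) :
  dnorm U w = mass w.
Proof. by rewrite /dnorm big_ord0 mul1r. Qed.

Lemma formnorm0_pos (R : realType) n k (om : Defs.form R n k) p v :
  is_kform om -> (om p v != 0)%R -> 0 < formnorm_j om 0.
Proof.
move=> H hv; have [w [hw hw0]] := kf_mass1 H hv.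
apply: (@lt_le_trans _ _ (`|om p w|)%:E); first by rewrite lte_fin normr_gt0.
apply: ereal_sup_ubound; right; exists p, (fun i : 'I_0 => 0%R), w; split.
  by rewrite dnorm0.
by rewrite evalf_diff0.
Qed.

Definition negf (R : realType) n k (om : Defs.form R n k) : Defs.form R n k :=
  fun p w => (- om p w)%R.

Lemma evalf_neg (R : realType) n k (om : Defs.form R n k) Q :
  evalf (negf om) Q = (- evalf om Q)%R.
Proof. by rewrite /evalf -sumrN; apply: eq_bigr => t _; rewrite /negf mulrN. Qed.

Lemma formnorm_j_neg (R : realType) n k (om : Defs.form R n k) j :
  formnorm_j (negf om) j = formnorm_j om j.
Proof.
rewrite /formnorm_j; congr (ereal_sup (_ |` _)); apply/seteqP; split => x /=;
  move=> [p [U [w [h1 h2]]]]; exists p, U, w; split => //;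
  by rewrite h2 evalf_neg normrN.
Qed.

Lemma formnorm_neg (R : realType) n k (om : Defs.form R n k) r :
  formnorm r (negf om) = formnorm r om.
Proof. by rewrite /formnorm; apply: eq_bigr => j _; rewrite formnorm_j_neg. Qed.

Lemma kform_neg (R : realType) n k (om : Defs.form R n k) :
  is_kform om -> is_kform (negf om).
Proof.
move=> H p; have [L A] := H p; split.
  by move=> w i a u v; rewrite /negf L opprD mulrN.
by move=> w i j hij hw; rewrite /negf (A w i j hij hw) oppr0.
Qed.

Lemma key_bound (R : realType) n k (om : Defs.form R n k) j (Q : chain R n k) :
  is_kform om -> formnorm j om < +oo ->
  (`|evalf om Q|)%:E <= chainnorm j Q * formnorm j om.
Proof.
move=> H hfin.
have [[p [v hv]]|hz] := pselect (exists p v, om p v <> 0%R); last first.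
  have -> : evalf om Q = 0%R.
    rewrite /evalf big1 // => t _.
    have -> : om t.1.2 t.2 = 0%R.
      by apply: contrapT => h; apply: hz; exists t.1.2, t.2.
    by rewrite mulr0.
  by rewrite normr0 mule_ge0 ?chainnorm_ge0 ?formnorm_ge0.
have F0 := formnorm_ge0 om j.
have hfe : formnorm j om = (fine (formnorm j om))%:E.
  by rewrite fineK // ge0_fin_numE.
set a := fine (formnorm j om).
have apos : (0 < a)%R.
  rewrite -lte_fin -hfe.
  apply: lt_le_trans (formnorm0_pos H (introN eqP hv)) (formnorm_j_le om (leq0n j)).
have hle : forall om' : Defs.form R n k, is_kform om' -> (exists p v, om' p v <> 0%R) ->
    formnorm j om' = formnorm j om ->
    (evalf om' Q / a)%:E <= chainnorm j Q.
  move=> om' H' hnz' hn'; apply: ereal_sup_ubound; right; exists om'; split => //.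
    by rewrite hn'.
  by rewrite hn'.
have hab : ((`|evalf om Q|) / a)%:E <= chainnorm j Q.
  have [he|he] := lerP 0%R (evalf om Q).
    rewrite ger0_norm //. apply: (hle om H _ erefl). by exists p, v.
  rewrite ltr0_norm // -(evalf_neg om Q); apply: hle.
  - exact: kform_neg.
  - by exists p, v; rewrite /negf => /eqP; rewrite oppr_eq0 => /eqP.
  - exact: formnorm_neg.
rewrite hfe.
have -> : (`|evalf om Q|)%:E = ((`|evalf om Q|) / a)%:E * a%:E.
  by rewrite -EFinM mulfVK // gt_eqF.
by apply: lee_wpmul2r => //; rewrite lee_fin ltW.
Qed.

Definition pull (R : realType) n m k (f : 'rV[R]_n -> 'rV[R]_m) (om : Defs.form R m k) :
  Defs.form R n k := fun p w => om (f p) (fun i => 'd f p (w i)).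

Lemma evalf_pull (R : realType) n m k (f : 'rV[R]_n -> 'rV[R]_m) (om : Defs.form R m k) P :
  evalf (pull f om) P = evalf om (push f P).
Proof. by rewrite /evalf /push big_map; apply: eq_bigr => [[[c p] w]] _. Qed.

Lemma kform_pull (R : realType) n m k (f : 'rV[R]_n -> 'rV[R]_m) (om : Defs.form R m k) :
  is_kform om -> is_kform (pull f om).
Proof.
move=> H p; have [L A] := H (f p); split.
  move=> w i a u v; rewrite /pull.
  have E : forall x, (fun l => 'd f p (upd w i x l)) = upd (fun l => 'd f p (w l)) i ('d f p x).
    by move=> x; apply: funext => l; rewrite /upd; case: eqP.
  by rewrite !E linearD linearZ L.
by move=> w i j hij hw; rewrite /pull (A _ i j hij) //= hw.
Qed.

Lemma enorm0 (R : realType) n : enorm (0 : 'rV[R]_n) = 0%R.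
Proof. by rewrite /enorm /dotv mul0mx mxE sqrtr0. Qed.

Lemma pull_bound (R : realType) n m k r (f : 'rV[R]_n -> 'rV[R]_m) (om : Defs.form R m k) j :
  is_kform om -> formnorm r om < +oo -> (j <= r)%N ->
  formnorm_j (pull f om) j <= mapnorm k r f * formnorm r om.
Proof.
move=> H hfin hj.
have M0 : 0 <= mapnorm k r f := le_trans (mapnorm_j_ge0 k f 0) (mapnorm_j_le k f (leq0n r)).
apply/ereal_supP => y [->|[p [U [w [hd ->]]]]].
  by apply: mule_ge0 => //; apply: formnorm_ge0.
rewrite evalf_pull.
have hjj : formnorm j om <= formnorm r om.
  rewrite {1}/formnorm; apply/bigmax_leP; split; first exact: formnorm_ge0.
  move=> i _; apply: formnorm_j_le; apply: leq_trans hj; rewrite -ltnS; exact: ltn_ord.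
have hjfin : formnorm j om < +oo by exact: le_lt_trans hjj hfin.
apply: le_trans (key_bound (push f (diffchain p U w)) H hjfin) _.
apply: lee_pmul => //; [exact: chainnorm_ge0 | exact: formnorm_ge0 |].
apply: le_trans (mapnorm_j_le k f hj).
apply: ereal_sup_ubound; right; exists p, U, w; split.
- move=> i; apply/eqP => hU; move: hd; rewrite /dnorm (bigD1 i) //= hU enorm0 !mul0r.
  by move=> /eqP; rewrite eq_sym oner_eq0.
- by apply/eqP => hm; move: hd; rewrite /dnorm hm mulr0 => /eqP; rewrite eq_sym oner_eq0.
- by rewrite hd invr1 mule1.
Qed.

Local Close Scope ereal_scope.

Theorem mainTheorem6 (R : realType) (n m k r : nat)
    (f : 'rV[R]_n -> 'rV[R]_m) :
  smooth f -> (mapnorm k r f < +oo)%E ->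
  forall P : chain R n k,
    (chainnorm r (push f P) <= mapnorm k r f * chainnorm r P)%E.
Proof.
move=> _ hM P.
have M0 : (0 <= mapnorm k r f)%E :=
  le_trans (mapnorm_j_ge0 k f 0) (mapnorm_j_le k f (leq0n r)).
have hMe : mapnorm k r f = (fine (mapnorm k r f))%:E by rewrite fineK // ge0_fin_numE.
set mm := fine (mapnorm k r f).
have mm0 : 0 <= mm by apply: fine_ge0.
apply/ereal_supP => y [->|[om [Hk Hnz Hfin ->]]].
  by apply: mule_ge0 => //; apply: chainnorm_ge0.
have F0 := formnorm_ge0 om r.
have hFe : formnorm r om = (fine (formnorm r om))%:E by rewrite fineK // ge0_fin_numE.
set a := fine (formnorm r om).
have a0 : 0 <= a by apply: fine_ge0.
rewrite -evalf_pull; set e := evalf (pull f om) P.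
have [az|apos] := eqVneq a 0.
  by rewrite az invr0 mulr0 mule_ge0 // chainnorm_ge0.
have apos' : 0 < a by rewrite lt_def apos a0.
have hPB : (formnorm r (pull f om) <= (mm * a)%:E)%E.
  rewrite {1}/formnorm; apply/bigmax_leP; split.
    by rewrite lee_fin mulr_ge0.
  move=> j _; rewrite EFinM -hMe -hFe; apply: pull_bound => //.
  by rewrite -ltnS.
have hPfin : (formnorm r (pull f om) < +oo)%E by apply: le_lt_trans hPB (ltry _).
have hkey := key_bound P (kform_pull f Hk) hPfin.
have h1 : ((`|e|)%:E <= chainnorm r P * (mm * a)%:E)%E.
  apply: le_trans hkey _; apply: lee_wpmul2l => //; exact: chainnorm_ge0.
apply: (@le_trans _ _ ((`|e| / a)%:E)).
  by rewrite lee_fin ler_pM2r ?invr_gt0 // ler_norm.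
rewrite hMe.
have -> : (`|e| / a)%:E = ((`|e|)%:E * (a^-1)%:E)%E by rewrite EFinM.
have -> : ((mm%:E * chainnorm r P) = (chainnorm r P * (mm * a)%:E) * (a^-1)%:E)%E.
  rewrite -muleA -EFinM -mulrA mulfV // mulr1 muleC //.
apply: lee_wpmul2r => //; by rewrite lee_fin invr_ge0.
Qed.
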